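(* Let $X$ be a space, let $Y$ be an extension of $X$ with compact remainder, let $\zeta Y$ be a compactification of $Y$, and let $\phi:\beta X\to\zeta Y$ be the continuous extension of the identity of $X$. Then $Y$ is realcompact (i.e. $Y\in\mathscr{R}(X)$) if and only if $\mathrm{cl}_{\beta X}(\upsilon X\setminus X)\subseteq\phi^{-1}[Y\setminus X]$.
   Context: All spaces are completely regular Hausdorff. $\beta X$ is the Stone–Čech compactification and $\upsilon X\subseteq\beta X$ the Hewitt realcompactification of $X$. An extension of $X$ is a space containing $X$ as a dense subspace; its remainder is $Y\setminus X$. A space is realcompact if it is homeomorphic to a closed subspace of a power of $\mathbb{R}$. $\mathscr{R}(X)$ is the set of realcompact extensions of $X$ with compact remainder. *)

(* Defs.v *)
From Stdlib Require Import Reals List.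
Open Scope R_scope.

Record space : Type := Space { carrier :> Type; opens : (carrier -> Prop) -> Prop }.
Arguments opens {s} _.

Definition is_topology (X : space) : Prop :=
  opens (fun _ : X => True) /\
  (forall U V : X -> Prop, opens U -> opens V -> opens (fun x => U x /\ V x)) /\
  (forall (I : Type) (F : I -> X -> Prop), (forall i, opens (F i)) ->
      opens (fun x => exists i, F i x)).

Definition continuous {X Y : space} (f : X -> Y) : Prop :=
  forall V : Y -> Prop, opens V -> opens (fun x => V (f x)).

Definition closed {X : space} (A : X -> Prop) : Prop := opens (fun x => ~ A x).

Definition closure {X : space} (A : X -> Prop) (p : X) : Prop :=
  forall U : X -> Prop, opens U -> U p -> exists q, U q /\ A q.

Definition dense {X : space} (A : X -> Prop) : Prop := forall p : X, closure A p.

Definition image {X Y : Type} (f : X -> Y) (y : Y) : Prop := exists x, y = f x.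

Definition hausdorff (X : space) : Prop :=
  forall x y : X, x <> y -> exists U V : X -> Prop,
    opens U /\ opens V /\ U x /\ V y /\ (forall z, ~ (U z /\ V z)).

Definition R_space : space :=
  Space R (fun U => forall x, U x -> exists eps, 0 < eps /\
                      forall y, Rabs (y - x) < eps -> U y).

Definition completely_regular (X : space) : Prop :=
  forall (F : X -> Prop) (x : X), closed F -> ~ F x ->
    exists f : X -> R_space, continuous f /\ f x = 0 /\ (forall y, F y -> f y = 1).

(* "space" = completely regular Hausdorff space *)
Definition tychonoff (X : space) : Prop :=
  is_topology X /\ hausdorff X /\ completely_regular X.

Definition compact (X : space) : Prop :=
  forall (I : Type) (U : I -> X -> Prop), (forall i, opens (U i)) ->
    (forall x, exists i, U i x) ->
    exists l : list I, forall x, exists i, In i l /\ U i x.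

Definition subspace (X : space) (A : X -> Prop) : space :=
  Space {x : X | A x}
    (fun U => exists V : X -> Prop, opens V /\ forall a, U a <-> V (proj1_sig a)).

Definition embedding {X Y : space} (f : X -> Y) : Prop :=
  (forall x y, f x = f y -> x = y) /\ continuous f /\
  (forall U : X -> Prop, opens U -> exists V : Y -> Prop, opens V /\ forall x, U x <-> V (f x)).

Definition extension (X Y : space) (e : X -> Y) : Prop :=
  is_topology Y /\ embedding e /\ dense (image e).

Definition compactification (X K : space) (e : X -> K) : Prop :=
  extension X K e /\ compact K /\ hausdorff K.

Definition compact_remainder (X Y : space) (e : X -> Y) : Prop :=
  compact (subspace Y (fun y => ~ image e y)).

Definition R_power (I : Type) : space :=
  Space (I -> R) (fun U => forall f, U f -> exists (l : list I) (eps : R), 0 < eps /\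
          forall g, (forall i, In i l -> Rabs (g i - f i) < eps) -> U g).

Definition realcompact (Y : space) : Prop :=
  exists (I : Type) (h : Y -> R_power I), embedding h /\ closed (image h).

(* (B, eb) is the Stone-Cech compactification of X (characterized, up to
   equivalence, by its universal property). *)
Definition stone_cech (X B : space) (eb : X -> B) : Prop :=
  compactification X B eb /\
  forall (K : space) (f : X -> K), is_topology K -> compact K -> hausdorff K ->
    continuous f -> exists g : B -> K, continuous g /\ forall x, g (eb x) = f x.

(* Hewitt realcompactification inside beta X: the points p of beta X such that
   every continuous f : X -> R extends continuously over X u {p}. *)
Definition hewitt_pt (X B : space) (eb : X -> B) (p : B) : Prop :=
  forall f : X -> R_space, continuous f ->
    exists g : subspace B (fun q => q = p \/ image eb q) -> R_space,
      continuous g /\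
      forall x (hx : eb x = p \/ image eb (eb x)), g (exist _ (eb x) hx) = f x.

(* Main.v *)
Require Import Defs.
From Stdlib Require Import Reals List.
From Stdlib Require Import Lra Classical ClassicalEpsilon FunctionalExtensionality PropExtensionality.
Require Import Defs.
Open Scope R_scope.


Lemma open_ext (X : space) (U V : X -> Prop) :
  opens U -> (forall x, U x <-> V x) -> opens V.
Proof.
  intros HU H. assert (E : U = V).
  { apply functional_extensionality; intro x; apply propositional_extensionality; apply H. }
  now subst.
Qed.

Lemma open_true (X : space) : is_topology X -> opens (fun _ : X => True).
Proof. intros [H _]; exact H. Qed.

Lemma open_inter (X : space) (U V : X -> Prop) : is_topology X ->
  opens U -> opens V -> opens (fun x => U x /\ V x).
Proof. intros [_ [H _]]; apply H. Qed.

Lemma open_Union (X : space) (I : Type) (F : I -> X -> Prop) : is_topology X ->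
  (forall i, opens (F i)) -> opens (fun x => exists i, F i x).
Proof. intros [_ [_ H]]; apply H. Qed.

Lemma open_empty (X : space) : is_topology X -> opens (fun _ : X => False).
Proof.
  intros T. apply (open_ext X (fun x => exists i : False, (fun _ _ => True) i x)).
  - apply open_Union; auto. intros [].
  - intro x; split; [intros [[] _]| intros []].
Qed.

Lemma open_union (X : space) (U V : X -> Prop) : is_topology X ->
  opens U -> opens V -> opens (fun x => U x \/ V x).
Proof.
  intros T HU HV.
  apply (open_ext X (fun x => exists b : bool, (if b then U else V) x)).
  - apply open_Union; auto. intros [|]; auto.
  - intro x; split.
    + intros [[|] H]; auto.
    + intros [H|H]; [exists true|exists false]; auto.
Qed.

Lemma choice' {A B : Type} (P : A -> B -> Prop) :
  (forall a, exists b, P a b) -> exists f : A -> B, forall a, P a (f a).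
Proof.
  intros H. exists (fun a => proj1_sig (constructive_indefinite_description _ (H a))).
  intro a; exact (proj2_sig (constructive_indefinite_description _ (H a))).
Qed.

Lemma open_local (X : space) (U : X -> Prop) : is_topology X ->
  (forall x, U x -> exists V, opens V /\ V x /\ forall y, V y -> U y) -> opens U.
Proof.
  intros T H.
  destruct (choice' (fun (s : {x | U x}) V => opens V /\ V (proj1_sig s) /\ forall y, V y -> U y)) as [F HF].
  { intros [x Hx]; apply H; auto. }
  apply (open_ext X (fun x => exists s, F s x)).
  - apply open_Union; auto. intro s. apply HF.
  - intro x; split.
    + intros [s Hs]. apply (HF s); auto.
    + intro Hx. exists (exist _ x Hx). apply (HF (exist _ x Hx)).
Qed.

Lemma open_list (X : space) (A : Type) (l : list A) (F : A -> X -> Prop) :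
  is_topology X -> (forall a, In a l -> opens (F a)) ->
  opens (fun x => forall a, In a l -> F a x).
Proof.
  intros T. induction l as [|a l IH]; intros H.
  - apply (open_ext X (fun _ => True)); [apply open_true; auto|].
    intro x; split; auto. intros _ a [].
  - apply (open_ext X (fun x => F a x /\ (forall b, In b l -> F b x))).
    + apply open_inter; auto. apply H; simpl; auto. apply IH; intros; apply H; simpl; auto.
    + intro x; split.
      * intros [H1 H2] b [<-|Hb]; auto.
      * intros H1; split; [apply H1; simpl; auto| intros; apply H1; simpl; auto].
Qed.

Lemma closure_of (X : space) (A : X -> Prop) x : A x -> closure A x.
Proof. intros H U _ HU; exists x; auto. Qed.

Lemma cont_comp (X Y Z : space) (f : X -> Y) (g : Y -> Z) :
  continuous f -> continuous g -> continuous (fun x => g (f x)).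
Proof. intros Hf Hg V HV. apply (Hf _ (Hg _ HV)). Qed.

Lemma cont_val (Y : space) (A : Y -> Prop) : continuous (fun s : subspace Y A => proj1_sig s).
Proof. intros V HV. exists V; split; auto; tauto. Qed.

Lemma subspace_top (Y : space) (A : Y -> Prop) : is_topology Y -> is_topology (subspace Y A).
Proof.
  intros T. split; [|split].
  - exists (fun _ => True); split; [apply open_true; auto| tauto].
  - intros U V [U' [HU' EU]] [V' [HV' EV]]. exists (fun x => U' x /\ V' x); split.
    + apply open_inter; auto.
    + intro a; rewrite EU, EV; tauto.
  - intros I F HF.
    destruct (choice' (fun i V => opens V /\ forall a, F i a <-> V (proj1_sig a)) HF) as [G HG].
    exists (fun x => exists i, G i x); split.
    + apply open_Union; auto. intro i; apply HG.
    + intro a; split; intros [i Hi]; exists i; apply (HG i); auto.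
Qed.

Definition contR (X : space) (f : X -> R) := @continuous X R_space f.

Lemma ball_open (c eps : R) : @opens R_space (fun y => Rabs (y - c) < eps).
Proof.
  intros y Hy. exists (eps - Rabs (y - c)); split; [lra|].
  intros z Hz. pose proof (Rabs_triang (z - y) (y - c)).
  replace (z - y + (y - c)) with (z - c) in H by ring. lra.
Qed.

Lemma contR_ball (X : space) (f : X -> R) : contR X f -> forall c eps,
  opens (fun x => Rabs (f x - c) < eps).
Proof. intros Hf c eps. apply (Hf _ (ball_open c eps)). Qed.

Lemma contR_intro (X : space) (f : X -> R) : is_topology X ->
  (forall x eps, 0 < eps -> exists U, opens U /\ U x /\ forall y, U y -> Rabs (f y - f x) < eps) ->
  contR X f.
Proof.
  intros T H V HV. apply open_local; auto. intros x Hx.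
  destruct (HV _ Hx) as [eps [Heps Hb]].
  destruct (H x eps Heps) as [U [HU [Ux HUy]]].
  exists U; split; [exact HU|split; [exact Ux|]]. intros y Hy. apply Hb. apply HUy; auto.
Qed.

Lemma contR_op2 (X : space) (op : R -> R -> R) (f g : X -> R) : is_topology X ->
  (forall a b eps, 0 < eps -> exists d, 0 < d /\ forall a' b', Rabs (a' - a) < d -> Rabs (b' - b) < d ->
     Rabs (op a' b' - op a b) < eps) ->
  contR X f -> contR X g -> contR X (fun x => op (f x) (g x)).
Proof.
  intros T Hop Hf Hg. apply contR_intro; auto. intros x eps Heps.
  destruct (Hop (f x) (g x) eps Heps) as [d [Hd Hd']].
  exists (fun y => Rabs (f y - f x) < d /\ Rabs (g y - g x) < d); repeat split.
  - apply open_inter; auto; apply contR_ball; auto.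
  - rewrite Rminus_diag, Rabs_R0; auto.
  - rewrite Rminus_diag, Rabs_R0; auto.
  - intros y [H1 H2]; auto.
Qed.

Lemma contR_plus (X : space) (f g : X -> R) : is_topology X -> contR X f -> contR X g ->
  contR X (fun x => f x + g x).
Proof.
  intros T. apply contR_op2; auto. intros a b eps He. exists (eps/2); split; [lra|].
  intros a' b' H1 H2. replace (a' + b' - (a + b)) with ((a' - a) + (b' - b)) by ring.
  pose proof (Rabs_triang (a' - a) (b' - b)). lra.
Qed.

Lemma contR_minus (X : space) (f g : X -> R) : is_topology X -> contR X f -> contR X g ->
  contR X (fun x => f x - g x).
Proof.
  intros T. apply contR_op2; auto. intros a b eps He. exists (eps/2); split; [lra|].
  intros a' b' H1 H2. replace (a' - b' - (a - b)) with ((a' - a) + - (b' - b)) by ring.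
  pose proof (Rabs_triang (a' - a) (- (b' - b))). rewrite Rabs_Ropp in H. lra.
Qed.

Lemma cpt_elim (op : R -> R) a : continuity_pt op a -> forall eps, 0 < eps ->
  exists d, 0 < d /\ forall y, Rabs (y - a) < d -> Rabs (op y - op a) < eps.
Proof.
  intros H eps He. destruct (H eps He) as [d [Hd Hd']]. exists d; split; auto.
  intros y Hy. destruct (Req_dec a y) as [<-|Hne].
  - rewrite Rminus_diag, Rabs_R0; auto.
  - apply (Hd' y). split; [split; auto; exact I|]. exact Hy.
Qed.

Lemma contR_un (X : space) (op : R -> R) (f : X -> R) : is_topology X ->
  (forall x, continuity_pt op (f x)) -> contR X f -> contR X (fun x => op (f x)).
Proof.
  intros T Hop Hf. apply contR_intro; auto. intros x eps Heps.
  destruct (cpt_elim op (f x) (Hop x) eps Heps) as [d [Hd Hd']].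
  exists (fun y => Rabs (f y - f x) < d); repeat split.
  - apply contR_ball; auto.
  - rewrite Rminus_diag, Rabs_R0; auto.
  - intros y Hy; auto.
Qed.

Lemma contR_const (X : space) (c : R) : is_topology X -> contR X (fun _ => c).
Proof.
  intros T. apply contR_intro; auto. intros x eps He. exists (fun _ => True); repeat split; auto.
  apply open_true; auto. intros; rewrite Rminus_diag, Rabs_R0; auto.
Qed.

Lemma cpt_id a : continuity_pt (fun t => t) a.
Proof. apply derivable_continuous_pt. apply derivable_pt_id. Qed.

Lemma cpt_const c a : continuity_pt (fun _ => c) a.
Proof. apply continuity_pt_const. intros x y; reflexivity. Qed.

Lemma cpt_abs a : continuity_pt Rabs a.
Proof. apply Rcontinuity_abs. Qed.

Lemma cpt_sqr a : continuity_pt (fun t => t * t) a.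
Proof. apply (continuity_pt_mult (fun t => t) (fun t => t)); apply cpt_id. Qed.

Lemma cpt_lin (m c : R) a : continuity_pt (fun t => m * t + c) a.
Proof.
  apply (continuity_pt_plus (fun t => m * t) (fun _ => c)); [|apply cpt_const].
  apply (continuity_pt_mult (fun _ => m) (fun t => t)); [apply cpt_const|apply cpt_id].
Qed.

Lemma contR_abs (X : space) (f : X -> R) : is_topology X -> contR X f -> contR X (fun x => Rabs (f x)).
Proof. intros T Hf. exact (contR_un X Rabs f T (fun x => cpt_abs (f x)) Hf). Qed.

Lemma contR_lin (X : space) (m c : R) (f : X -> R) : is_topology X -> contR X f ->
  contR X (fun x => m * f x + c).
Proof. intros T Hf. exact (contR_un X (fun t => m * t + c) f T (fun x => cpt_lin m c (f x)) Hf). Qed.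

Lemma contR_ext (X : space) (f g : X -> R) : contR X f -> (forall x, f x = g x) -> contR X g.
Proof.
  intros H E. replace g with f; auto. apply functional_extensionality; auto.
Qed.

Lemma contR_mult (X : space) (f g : X -> R) : is_topology X -> contR X f -> contR X g ->
  contR X (fun x => f x * g x).
Proof.
  intros T Hf Hg.
  pose proof (contR_plus X f g T Hf Hg) as H1.
  pose proof (contR_minus X f g T Hf Hg) as H2.
  pose proof (contR_un X (fun t => t * t) _ T (fun x => cpt_sqr _) H1) as H3.
  pose proof (contR_un X (fun t => t * t) _ T (fun x => cpt_sqr _) H2) as H4.
  pose proof (contR_lin X (1/4) 0 _ T H3) as H5.
  pose proof (contR_lin X (-(1/4)) 0 _ T H4) as H6.
  pose proof (contR_plus X _ _ T H5 H6) as H7.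
  apply (contR_ext X _ _ H7). intro x; cbv beta; field.
Qed.

Definition sig_ (t : R) : R := t / (1 + Rabs t).
Definition siginv (y : R) : R := y / (1 - Rabs y).

Lemma sig_abs t : Rabs (sig_ t) = Rabs t / (1 + Rabs t).
Proof.
  unfold sig_, Rdiv. rewrite Rabs_mult, Rabs_inv.
  pose proof (Rabs_pos t). rewrite (Rabs_pos_eq (1 + Rabs t)); lra.
Qed.

Lemma sig_lt1 t : Rabs (sig_ t) < 1.
Proof.
  rewrite sig_abs. pose proof (Rabs_pos t).
  apply (Rmult_lt_reg_r (1 + Rabs t)); [lra|]. unfold Rdiv.
  rewrite Rmult_assoc, Rinv_l; lra.
Qed.

Lemma sig_in t : -1 <= sig_ t <= 1.
Proof. pose proof (sig_lt1 t). revert H; unfold Rabs; destruct Rcase_abs; lra. Qed.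

Lemma siginv_sig t : siginv (sig_ t) = t.
Proof.
  unfold siginv. rewrite sig_abs. unfold sig_. pose proof (Rabs_pos t). field. lra.
Qed.

Lemma sig0 : sig_ 0 = 0.
Proof. unfold sig_; rewrite Rabs_R0; field. Qed.

Lemma sig_abs_mono a b : 0 <= a -> 0 <= b -> a / (1 + a) < b / (1 + b) -> a < b.
Proof.
  intros Ha Hb H. destruct (Rlt_le_dec a b) as [|Hle]; auto. exfalso.
  assert (b / (1 + b) <= a / (1 + a)); [|lra].
  unfold Rdiv. apply (Rmult_le_reg_r ((1 + a) * (1 + b))). nra.
  replace (b * / (1 + b) * ((1 + a) * (1 + b))) with (b * (1 + a)) by (field; lra).
  replace (a * / (1 + a) * ((1 + a) * (1 + b))) with (a * (1 + b)) by (field; lra). nra.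
Qed.

Lemma sig_abs_lt a : 0 <= a -> a / (1 + a) < 1.
Proof.
  intros Ha. apply (Rmult_lt_reg_r (1 + a)); [lra|]. unfold Rdiv.
  rewrite Rmult_assoc, Rinv_l; lra.
Qed.

Lemma cpt_sig a : continuity_pt sig_ a.
Proof.
  apply (continuity_pt_div (fun t => t) (fun t => 1 + Rabs t)).
  - apply cpt_id.
  - apply (continuity_pt_plus (fun _ => 1) Rabs); [apply cpt_const|apply cpt_abs].
  - pose proof (Rabs_pos a); lra.
Qed.

Lemma cpt_siginv a : Rabs a < 1 -> continuity_pt siginv a.
Proof.
  intros Ha.
  apply (continuity_pt_div (fun t => t) (fun t => 1 - Rabs t)).
  - apply cpt_id.
  - apply (continuity_pt_minus (fun _ => 1) Rabs); [apply cpt_const|apply cpt_abs].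
  - lra.
Qed.

Lemma R_top : is_topology R_space.
Proof.
  split; [|split].
  - intros x _; exists 1; split; [lra|auto].
  - intros U V HU HV x [Ux Vx].
    destruct (HU x Ux) as [e1 [He1 H1]]; destruct (HV x Vx) as [e2 [He2 H2]].
    exists (Rmin e1 e2); split; [apply Rmin_pos; auto|].
    intros y Hy; split; [apply H1|apply H2]; pose proof (Rmin_l e1 e2); pose proof (Rmin_r e1 e2); lra.
  - intros I F HF x [i Hi]. destruct (HF i x Hi) as [e [He H]]. exists e; split; auto.
    intros y Hy; exists i; auto.
Qed.

Definition Jset (t : R) : Prop := -1 <= t <= 1.
Definition J : space := subspace R_space Jset.

Lemma J_top : is_topology J.
Proof. apply subspace_top, R_top. Qed.

Lemma J_haus : hausdorff J.
Proof.
  intros [a Ha] [b Hb] Hne.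
  assert (Hab : a <> b).
  { intro E; subst; apply Hne; f_equal; apply proof_irrelevance. }
  set (d := Rabs (a - b) / 2).
  assert (Hd : 0 < d). { unfold d. assert (a - b <> 0) by (intro; apply Hab; lra). apply Rabs_pos_lt in H. lra. }
  exists (fun s : J => Rabs (proj1_sig s - a) < d), (fun s : J => Rabs (proj1_sig s - b) < d).
  split; [|split; [|split; [|split]]].
  - exists (fun t => Rabs (t - a) < d); split; [apply ball_open| tauto].
  - exists (fun t => Rabs (t - b) < d); split; [apply ball_open| tauto].
  - simpl; rewrite Rminus_diag, Rabs_R0; auto.
  - simpl; rewrite Rminus_diag, Rabs_R0; auto.
  - intros [z Hz] [H1 H2]; simpl in *.
    pose proof (Rabs_triang (a - z) (z - b)). rewrite <- Rabs_Ropp in H1.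
    replace (- (z - a)) with (a - z) in H1 by ring.
    replace (a - z + (z - b)) with (a - b) in H by ring. unfold d in *; lra.
Qed.

Lemma J_compact : compact J.
Proof.
  intros I U HU Hcov.
  assert (H0 : Jset 0) by (unfold Jset; lra).
  destruct (Hcov (exist Jset 0 H0)) as [i0 _].
  destruct (choice' (fun i V => @opens R_space V /\ forall a : J, U i a <-> V (proj1_sig a)) HU) as [V HV].
  set (j := fun c : R => epsilon (inhabits i0) (fun i => forall H : Jset c, U i (exist _ c H))).
  assert (Hj : forall c (H : Jset c), U (j c) (exist _ c H)).
  { intros c H. unfold j. apply (epsilon_spec (inhabits i0) (fun i => forall H : Jset c, U i (exist _ c H))).
    destruct (Hcov (exist _ c H)) as [i Hi]. exists i. intros H'.
    replace H' with H by apply proof_irrelevance. auto. }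
  set (fam := fun c x => Jset c /\ V (j c) x).
  assert (Hcf : forall c, (exists y, fam c y) -> Jset c).
  { intros c [y [Hy _]]; auto. }
  pose (F := mkfamily Jset fam Hcf).
  destruct (compact_P3 (-1) 1 F) as [D [Hcovf [l Hl]]].
  - split.
    + intros x Hx. exists x. simpl. unfold fam. split; auto.
      apply (proj2 (HV (j x)) (exist _ x Hx)). apply Hj.
    + intros c x Hx. simpl in Hx. unfold fam in Hx. destruct Hx as [Hc Hv].
      destruct (proj1 (HV (j c)) x Hv) as [e [He He']].
      exists (mkposreal e He). intros y Hy. simpl. unfold fam; split; [exact Hc|].
      apply He'. exact Hy.
  - exists (map j l). intros [x Hx].
    destruct (Hcovf x Hx) as [c [[Hc Hv] HDc]].
    exists (j c); split.
    + apply in_map. apply Hl. split; auto.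
    + apply (proj2 (HV (j c))). exact Hv.
Qed.

Lemma gt_open c : @opens R_space (fun t => c < t).
Proof. intros t Ht. exists (t - c); split; [lra|]. intros y Hy. revert Hy; unfold Rabs; destruct Rcase_abs; lra. Qed.

Lemma lt_open c : @opens R_space (fun t => t < c).
Proof. intros t Ht. exists (c - t); split; [lra|]. intros y Hy. revert Hy; unfold Rabs; destruct Rcase_abs; lra. Qed.

Lemma stone_top X B eb : stone_cech X B eb -> is_topology B.
Proof. intros [[[T _] _] _]; exact T. Qed.

Lemma stone_haus X B eb : stone_cech X B eb -> hausdorff B.
Proof. intros [[_ [_ H]] _]; exact H. Qed.

Lemma stone_dense X B eb : stone_cech X B eb -> dense (image eb).
Proof. intros [[[_ [_ H]] _] _]; exact H. Qed.

Lemma ext_fun (X B : space) (eb : X -> B) : stone_cech X B eb -> is_topology X ->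
  forall f, contR X f -> exists Fb : B -> R, contR B Fb /\ (forall x, Fb (eb x) = sig_ (f x)) /\
    (forall b, Jset (Fb b)).
Proof.
  intros HS TX f Hf.
  set (sf := fun x => exist Jset (sig_ (f x)) (sig_in (f x)) : subspace R_space Jset).
  assert (Hsf : @continuous X J sf).
  { intros V [V' [HV' E]].
    apply (open_ext X (fun x => V' (sig_ (f x)))).
    - apply (contR_un X sig_ f TX (fun x => cpt_sig _) Hf); auto.
    - intro x; rewrite (E (sf x)); simpl; tauto. }
  destruct HS as [_ HU]. destruct (HU J sf J_top J_compact J_haus Hsf) as [g [Hg Hge]].
  exists (fun b => proj1_sig (g b)); split; [|split].
  - exact (cont_comp B J R_space g _ Hg (cont_val R_space Jset)).
  - intro x; rewrite Hge; reflexivity.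
  - intro b; exact (proj2_sig (g b)).
Qed.

Lemma unbounded (X B : space) (eb : X -> B) (f : X -> R) (q0 : B) :
  stone_cech X B eb -> is_topology X -> contR X f ->
  ~ (exists g : subspace B (fun q => q = q0 \/ image eb q) -> R_space,
      continuous g /\ forall x (hx : eb x = q0 \/ image eb (eb x)), g (exist _ (eb x) hx) = f x) ->
  forall M, exists W, opens W /\ W q0 /\ forall x, W (eb x) -> M < Rabs (f x).
Proof.
  intros HS TX Hf Hne M. pose proof (stone_top _ _ _ HS) as TB.
  destruct (ext_fun X B eb HS TX f Hf) as [Fb [HFb [HFe HFJ]]].
  assert (H1 : Rabs (Fb q0) = 1).
  { destruct (Req_dec (Rabs (Fb q0)) 1) as [|Hn]; auto. exfalso. apply Hne.
    assert (Hlt : Rabs (Fb q0) < 1).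
    { pose proof (HFJ q0). unfold Jset in H. revert Hn; unfold Rabs; destruct Rcase_abs; lra. }
    exists (fun s => siginv (Fb (proj1_sig s))); split.
    - intros V HV.
      exists (fun b => Rabs (Fb b) < 1 /\ V (siginv (Fb b))); split.
      + apply (HFb (fun t => Rabs t < 1 /\ V (siginv t))).
        intros t [Ht HVt]. destruct (HV _ HVt) as [e [He He']].
        destruct (cpt_elim siginv t (cpt_siginv t Ht) e He) as [d [Hd Hd']].
        exists (Rmin d (1 - Rabs t)); split. apply Rmin_pos; lra.
        intros y Hy. pose proof (Rmin_l d (1 - Rabs t)). pose proof (Rmin_r d (1 - Rabs t)).
        split.
        * pose proof (Rabs_triang (y - t) t). replace (y - t + t) with y in H1 by ring. lra.
        * apply He'. apply Hd'. lra.
      + intros [s Hs]; simpl. split; [intros Hv; split; auto| tauto].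
        destruct Hs as [->|[x ->]]; auto. rewrite HFe. apply sig_lt1.
    - intros x hx; simpl. rewrite HFe. apply siginv_sig. }
  set (m := Rabs M / (1 + Rabs M)).
  assert (Hm : m < 1) by (apply sig_abs_lt, Rabs_pos).
  exists (fun b => m < Rabs (Fb b)); split; [|split].
  - apply (contR_abs B Fb TB HFb _ (gt_open m)).
  - rewrite H1; auto.
  - intros x Hx. rewrite HFe, sig_abs in Hx.
    pose proof (sig_abs_mono (Rabs M) (Rabs (f x)) (Rabs_pos _) (Rabs_pos _) Hx).
    pose proof (Rle_abs M). lra.
Qed.

Lemma stone_cont X B eb : stone_cech X B eb -> continuous eb.
Proof. intros [[[_ [[_ [H _]] _]] _] _]; exact H. Qed.

Lemma sig1 : sig_ 1 = 1/2.
Proof. unfold sig_; rewrite Rabs_R1; field. Qed.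

Lemma not_in_X (X Y Z B : space) (eY : X -> Y) (eZ : Y -> Z) (eb : X -> B) (phi : B -> Z) :
  tychonoff X -> extension X Y eY -> compactification Y Z eZ -> stone_cech X B eb ->
  continuous phi -> (forall x, phi (eb x) = eZ (eY x)) ->
  forall q, ~ image eb q -> forall x0, phi q <> eZ (eY x0).
Proof.
  intros [TX [_ CRX]] [_ [EY _]] [[_ [EZ _]] _] HS Hphi Hpe q Hq x0 E.
  pose proof (stone_top _ _ _ HS) as TB. pose proof (stone_dense _ _ _ HS) as DB.
  pose proof (stone_cont _ _ _ HS) as CB.
  assert (Hne : q <> eb x0) by (intro; apply Hq; exists x0; auto).
  destruct (stone_haus _ _ _ HS q (eb x0) Hne) as [U [U' [HU [HU' [Uq [U'x Hdis]]]]]].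
  assert (Hcl : closed (fun x => ~ U' (eb x))).
  { apply (open_ext X (fun x => U' (eb x))); [apply CB; auto| intro; tauto]. }
  destruct (CRX _ x0 Hcl) as [f [Hf [Hf0 Hf1]]]; [tauto|].
  destruct (ext_fun X B eb HS TX f Hf) as [Fb [HFb [HFe HFJ]]].
  assert (Hq2 : Fb q = 1/2).
  { apply NNPP; intro Hn. set (e := Rabs (Fb q - 1/2)).
    assert (He : 0 < e) by (apply Rabs_pos_lt; lra).
    destruct (DB q (fun b => U b /\ Rabs (Fb b - Fb q) < e)) as [b [[Ub Hb] [y ->]]].
    - apply open_inter; auto. apply contR_ball; auto.
    - split; auto. rewrite Rminus_diag, Rabs_R0; auto.
    - rewrite HFe, Hf1, sig1 in Hb. 2:{ intro Hu. apply (Hdis (eb y)); auto. }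
      unfold e in Hb. rewrite Rabs_minus_sym in Hb. lra. }
  destruct EY as [_ [_ EY]]. destruct EZ as [_ [_ EZ]].
  destruct (EY (fun x => Rabs (sig_ (f x)) < 1/4)) as [WY [HWY EWY]].
  { apply (contR_abs X _ TX (contR_un X sig_ f TX (fun x => cpt_sig _) Hf) _ (lt_open (1/4))). }
  destruct (EZ WY HWY) as [W [HW EW]].
  assert (Wq : W (phi q)).
  { rewrite E. apply EW, EWY. rewrite Hf0, sig0, Rabs_R0; lra. }
  destruct (DB q (fun b => W (phi b) /\ Rabs (Fb b - 1/2) < 1/4)) as [b [[Wb Hb] [y ->]]].
  - apply open_inter; [exact TB|apply Hphi; exact HW|apply contR_ball; exact HFb].
  - split; auto. rewrite Hq2, Rminus_diag, Rabs_R0; lra.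
  - rewrite Hpe in Wb. apply EW, EWY in Wb. rewrite HFe in Hb.
    revert Wb Hb; unfold Rabs; repeat destruct Rcase_abs; lra.
Qed.

Lemma sep (Y Z : space) (e : Y -> Z) (A : Y -> Prop) : is_topology Z -> hausdorff Z ->
  continuous e -> compact (subspace Y A) -> forall z, (forall a, A a -> e a <> z) ->
  exists W1 W2, opens W1 /\ opens W2 /\ W1 z /\ (forall a, A a -> W2 (e a)) /\
    forall u, ~ (W1 u /\ W2 u).
Proof.
  intros TZ HZ He HA z Hz.
  destruct (choice' (fun (s : {a | A a}) (P : (Z -> Prop) * (Z -> Prop)) =>
     opens (fst P) /\ opens (snd P) /\ fst P z /\ snd P (e (proj1_sig s)) /\
     forall u, ~ (fst P u /\ snd P u))) as [P HP].
  { intros [a Ha]. destruct (HZ z (e a)) as [U [V [HU [HV [Uz [Va Hd]]]]]].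
    - intro E; apply (Hz a Ha); auto.
    - exists (U, V); simpl; auto. }
  destruct (HA {a | A a} (fun s t => snd (P s) (e (proj1_sig t)))) as [l Hl].
  - intro s. exists (fun y => snd (P s) (e y)); split; [apply He, HP| tauto].
  - intro t. exists t. apply HP.
  - exists (fun u => forall s, In s l -> fst (P s) u), (fun u => exists s, In s l /\ snd (P s) u).
    split; [|split; [|split; [|split]]].
    + apply open_list; auto. intros; apply HP.
    + apply (open_ext Z (fun u => exists i : {s | In s l}, snd (P (proj1_sig i)) u)).
      * apply open_Union; auto. intro i; apply HP.
      * intro u; split.
        -- intros [[s Hs] H]; exists s; auto.
        -- intros [s [Hs H]]; exists (exist _ s Hs); auto.
    + intros s _; apply HP.
    + intros a Ha. destruct (Hl (exist _ a Ha)) as [s [Hs H]]. exists s; auto.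
    + intros u [H1 [s [Hs H2]]]. apply (proj2 (proj2 (proj2 (proj2 (HP s)))) u). auto.
Qed.

Lemma proj_cont (I : Type) (i : I) : @continuous (R_power I) R_space (fun g => g i).
Proof.
  intros V HV f Hf. destruct (HV _ Hf) as [e [He He']].
  exists (i :: nil), e; split; auto. intros g Hg. apply He'. apply Hg; simpl; auto.
Qed.

Lemma forward (X Y Z B : space) (eY : X -> Y) (eZ : Y -> Z) (eb : X -> B) (phi : B -> Z) :
  tychonoff X -> tychonoff Y ->
  extension X Y eY -> compact_remainder X Y eY ->
  compactification Y Z eZ ->
  stone_cech X B eb ->
  continuous phi -> (forall x, phi (eb x) = eZ (eY x)) ->
  realcompact Y ->
  forall p : B,
     closure (fun q => hewitt_pt X B eb q /\ ~ image eb q) p ->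
     exists y : Y, ~ image eY y /\ phi p = eZ y.
Proof.
  intros HX HY HeY HK HZ HS Hphi Hpe [I [h [[Hinj [Hhc Hho]] Hcl]]].
  pose proof HX as HX0; pose proof HeY as HeY0; pose proof HZ as HZ0.
  pose proof (stone_top _ _ _ HS) as TB. pose proof (stone_dense _ _ _ HS) as DB.
  destruct HX as [TX _]. destruct HY as [TY _].
  destruct HeY as [_ [[_ [CeY _]] _]].
  destruct HZ as [[TZ [[_ [CeZ _]] _]] [_ HausZ]].
  assert (C1 : forall q, hewitt_pt X B eb q -> exists y, phi q = eZ y).
  { intros q Hq.
    destruct (choice' (fun (i : I) (g : subspace B (fun q' => q' = q \/ image eb q') -> R_space) =>
       continuous g /\ forall x (hx : eb x = q \/ image eb (eb x)), g (exist _ (eb x) hx) = h (eY x) i))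
      as [G HG].
    { intro i. apply Hq.
      exact (cont_comp X Y R_space eY (fun y => h y i) CeY (cont_comp Y (R_power I) R_space h _ Hhc (proj_cont I i))). }
    set (sq := exist (fun q' => q' = q \/ image eb q') q (or_introl eq_refl)).
    set (r := fun i => G i sq).
    assert (KL : forall l eps W, 0 < eps -> opens W -> W q -> exists x, W (eb x) /\
                   forall i, In i l -> Rabs (h (eY x) i - r i) < eps).
    { intros l eps W He HW Wq.
      destruct (choice' (fun i (O : B -> Prop) => opens O /\ forall s, Rabs (G i s - r i) < eps <-> O (proj1_sig s)))
        as [O HO].
      { intro i. exact (proj1 (HG i) _ (ball_open (r i) eps)). }
      destruct (DB q (fun b => W b /\ forall i, In i l -> O i b)) as [b [[Wb Ob] [x ->]]].
      - apply open_inter; auto. apply open_list; auto. intros; apply HO.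
      - split; auto. intros i _. apply (proj2 (HO i) sq). unfold r; rewrite Rminus_diag, Rabs_R0; auto.
      - exists x; split; auto. intros i Hi.
        pose proof (proj2 (proj2 (HO i) (exist _ (eb x) (or_intror (ex_intro _ x eq_refl)))) (Ob i Hi)) as H.
        simpl in H. rewrite (proj2 (HG i)) in H. exact H. }
    assert (Hr : image h r).
    { apply NNPP; intro Hn. destruct (Hcl r Hn) as [l [eps [He He']]].
      destruct (KL l eps (fun _ => True) He (open_true B TB) Logic.I) as [x [_ Hx]].
      apply (He' (h (eY x)) Hx). exists (eY x); auto. }
    destruct Hr as [y Ey]. exists y.
    apply NNPP; intro Hne.
    destruct (HausZ _ _ Hne) as [W [W' [HW [HW' [Wq [W'y Hd]]]]]].
    destruct (Hho (fun y' => W' (eZ y'))) as [V [HV EV]]; [apply CeZ; auto|].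
    assert (Vr : V r) by (rewrite Ey; apply EV; auto).
    destruct (HV r Vr) as [l [eps [He He']]].
    destruct (KL l eps (fun b => W (phi b)) He (Hphi _ HW) Wq) as [x [Wx Hx]].
    apply (Hd (phi (eb x))). split; auto. rewrite Hpe. apply EV. apply He'. exact Hx. }
  intros p Hp. apply NNPP; intro Hn.
  destruct (sep Y Z eZ (fun y => ~ image eY y) TZ HausZ CeZ HK (phi p)) as [W1 [W2 [HW1 [HW2 [W1p [HW2K Hd]]]]]].
  { intros a Ha E; apply Hn; exists a; auto. }
  destruct (Hp (fun b => W1 (phi b)) (Hphi _ HW1) W1p) as [q [W1q [Hq Hqx]]].
  destruct (C1 q Hq) as [y Ey].
  destruct (classic (image eY y)) as [[x0 ->]|Hy].
  - exact (not_in_X X Y Z B eY eZ eb phi HX0 HeY0 HZ0 HS Hphi Hpe q Hqx x0 Ey).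
  - apply (Hd (phi q)); split; auto. rewrite Ey; apply HW2K; auto.
Qed.

Definition mn (a b : R) : R := (a + b - Rabs (a - b)) / 2.

Lemma mn_l a b : mn a b <= a.
Proof. unfold mn, Rabs; destruct Rcase_abs; lra. Qed.
Lemma mn_r a b : mn a b <= b.
Proof. unfold mn, Rabs; destruct Rcase_abs; lra. Qed.
Lemma mn_eq a b : a = b -> mn a b = a.
Proof. intros ->. unfold mn. rewrite Rminus_diag, Rabs_R0. lra. Qed.

Lemma contR_mn (X : space) (f g : X -> R) : is_topology X -> contR X f -> contR X g ->
  contR X (fun x => mn (f x) (g x)).
Proof.
  intros T Hf Hg.
  pose proof (contR_plus X f g T Hf Hg) as H1.
  pose proof (contR_abs X _ T (contR_minus X f g T Hf Hg)) as H2.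
  pose proof (contR_lin X (1/2) 0 _ T (contR_minus X _ _ T H1 H2)) as H3.
  apply (contR_ext X _ _ H3). intro x; unfold mn; cbv beta; field.
Qed.

Lemma cutoff (Y : space) (A C : Y -> Prop) : is_topology Y -> completely_regular Y ->
  compact (subspace Y A) -> closed C -> (forall y, A y -> ~ C y) ->
  exists psi N, contR Y psi /\ opens N /\ (forall y, A y -> N y) /\
    (forall y, N y -> psi y = 0) /\ (forall y, C y -> psi y = 1).
Proof.
  intros T CR HA HC Hd.
  destruct (choice' (fun (s : {a | A a}) (f : Y -> R) => contR Y f /\ f (proj1_sig s) = 0 /\
                        forall y, C y -> f y = 1)) as [f Hf].
  { intros [a Ha]. destruct (CR C a HC (Hd a Ha)) as [f [H1 [H2 H3]]]. exists f; auto. }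
  set (c := fun s y => mn 1 (Rabs (f s y))).
  assert (Hcc : forall s, contR Y (c s)).
  { intro s. apply (contR_mn Y (fun _ => 1)); auto. apply contR_const; auto. apply contR_abs; auto. apply Hf. }
  assert (Hcs : forall s, c s (proj1_sig s) = 0).
  { intro s. unfold c. rewrite (proj1 (proj2 (Hf s))), Rabs_R0. unfold mn. rewrite Rminus_0_r, Rabs_R1. lra. }
  assert (HcC : forall s y, C y -> c s y = 1).
  { intros s y Hy. unfold c. rewrite (proj2 (proj2 (Hf s)) y Hy), Rabs_R1. apply mn_eq; auto. }
  destruct (HA {a | A a} (fun s t => c s (proj1_sig t) < 1/2)) as [l Hl].
  - intro s. exists (fun y => c s y < 1/2); split; [apply (Hcc s _ (lt_open (1/2)))| tauto].
  - intro t. exists t. rewrite Hcs; lra.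
  - set (psi0 := fun y => fold_right (fun s m => mn (c s y) m) 1 l).
    assert (Hp0 : contR Y psi0).
    { unfold psi0. clear Hl. induction l as [|s l IH]; simpl.
      - apply contR_const; auto.
      - apply (contR_mn Y (c s) (fun y => fold_right (fun s0 m => mn (c s0 y) m) 1 l)); auto. }
    assert (Hp0l : forall y s, In s l -> psi0 y <= c s y).
    { intros y s Hs. unfold psi0. clear Hl Hp0 psi0. induction l as [|s' l IH]; simpl in *; [tauto|].
      destruct Hs as [<-|Hs]; [apply mn_l|]. pose proof (mn_r (c s' y) (fold_right (fun s0 m => mn (c s0 y) m) 1 l)). specialize (IH Hs). lra. }
    assert (Hp0C : forall y, C y -> psi0 y = 1).
    { intros y Hy. unfold psi0. clear Hl Hp0l Hp0 psi0. induction l as [|s l IH]; simpl; auto.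
      rewrite IH, HcC; auto. apply mn_eq; auto. }
    exists (fun y => (1/2) * ((2 * psi0 y + -1) + Rabs (2 * psi0 y + -1)) + 0),
           (fun y => exists s, In s l /\ c s y < 1/2).
    split; [|split; [|split; [|split]]].
    + apply contR_lin; auto. apply contR_plus; auto. apply contR_lin; auto.
      apply contR_abs; auto. apply contR_lin; auto.
    + apply (open_ext Y (fun y => exists i : {s | In s l}, c (proj1_sig i) y < 1/2)).
      * apply open_Union; auto. intro i. apply (Hcc _ _ (lt_open (1/2))).
      * intro y; split.
        -- intros [[s Hs] H]; exists s; auto.
        -- intros [s [Hs H]]; exists (exist _ s Hs); auto.
    + intros y Hy. destruct (Hl (exist _ y Hy)) as [s [Hs H]]. exists s; auto.
    + intros y [s [Hs H]]. pose proof (Hp0l y s Hs). rewrite Rabs_left; lra.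
    + intros y Hy. rewrite Hp0C; auto. rewrite Rabs_right; lra.
Qed.

Lemma X_open (X Y : space) (eY : X -> Y) : is_topology Y -> hausdorff Y ->
  compact_remainder X Y eY -> opens (image eY).
Proof.
  intros T H HK. apply open_local; auto. intros y [x ->].
  destruct (sep Y Y (fun y => y) (fun y => ~ image eY y) T H (fun V HV => HV) HK (eY x)) as [W1 [W2 [HW1 [HW2 [W1x [HK2 Hd]]]]]].
  { intros a Ha E; apply Ha; exists x; auto. }
  exists W1; split; auto; split; auto. intros y Hy. apply NNPP; intro Hn.
  apply (Hd y); auto.
Qed.

Definition Ix (Y : space) := {g : Y -> R | contR Y g}.
Definition hmap (Y : space) (y : Y) : R_power (Ix Y) := fun i => proj1_sig i y.

Lemma hmap_embedding (Y : space) : tychonoff Y -> embedding (hmap Y).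
Proof.
  intros [T [H CR]]. split; [|split].
  - intros y1 y2 E. apply NNPP; intro Hne.
    assert (Hcl : closed (fun y => y = y2)).
    { apply open_local; auto. intros y Hy. destruct (H y y2 Hy) as [U [V [HU [HV [Uy [Vy Hd]]]]]].
      exists U; split; auto; split; auto. intros z Hz ->. apply (Hd y2); auto. }
    destruct (CR _ y1 Hcl Hne) as [f [Hf [H0 H1]]].
    pose proof (equal_f E (exist _ f Hf)) as E'. unfold hmap in E'; simpl in E'.
    rewrite H0, H1 in E'; auto. lra.
  - intros V HV. apply open_local; auto. intros y Hy.
    destruct (HV _ Hy) as [l [e [He He']]].
    exists (fun y' => forall i, In i l -> Rabs (proj1_sig i y' - proj1_sig i y) < e); split; [|split].
    + apply open_list; auto. intros i _. apply contR_ball, (proj2_sig i).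
    + intros i _. rewrite Rminus_diag, Rabs_R0; auto.
    + intros y' Hy'. apply He'. exact Hy'.
  - intros U HU.
    exists (fun g : R_power (Ix Y) => exists y0 (i : Ix Y), U y0 /\ proj1_sig i y0 = 0 /\
              (forall y, ~ U y -> proj1_sig i y = 1) /\ Rabs (g i) < 1/2).
    split.
    + intros g [y0 [i [Uy0 [Hi0 [Hi1 Hg]]]]].
      exists (i :: nil), (1/2 - Rabs (g i)); split; [lra|].
      intros g' Hg'. exists y0, i; repeat split; auto.
      specialize (Hg' i (or_introl eq_refl)).
      pose proof (Rabs_triang (g' i - g i) (g i)). replace (g' i - g i + g i) with (g' i) in H0 by ring. lra.
    + intro y; split.
      * intros Uy. assert (Hcl : closed (fun y => ~ U y)).
        { apply (open_ext Y U); auto. intro; tauto. }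
        destruct (CR _ y Hcl) as [f [Hf [H0 H1]]]; [tauto|].
        exists y, (exist _ f Hf); repeat split; auto. unfold hmap; simpl. rewrite H0, Rabs_R0; lra.
      * intros [y0 [i [Uy0 [Hi0 [Hi1 Hg]]]]]. apply NNPP; intro Hn. unfold hmap in Hg.
        rewrite (Hi1 y Hn), Rabs_R1 in Hg. lra.
Qed.

Lemma backward (X Y Z B : space) (eY : X -> Y) (eZ : Y -> Z) (eb : X -> B) (phi : B -> Z) :
  tychonoff X -> tychonoff Y ->
  extension X Y eY -> compact_remainder X Y eY ->
  compactification Y Z eZ ->
  stone_cech X B eb ->
  continuous phi -> (forall x, phi (eb x) = eZ (eY x)) ->
  (forall p : B,
     closure (fun q => hewitt_pt X B eb q /\ ~ image eb q) p ->
     exists y : Y, ~ image eY y /\ phi p = eZ y) ->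
  closed (image (hmap Y)).
Proof.
  intros HX HY HeY HK HZ HS Hphi Hpe Hcond.
  pose proof (stone_top _ _ _ HS) as TB. pose proof (stone_dense _ _ _ HS) as DB.
  destruct HX as [TX _]. destruct HY as [TY [HausY CRY]].
  destruct HeY as [_ [[InjY [CeY EmbY]] DY]].
  destruct HZ as [[TZ [[_ [CeZ EmbZ]] _]] [_ HausZ]].
  pose proof HS as [[_ [CompB _]] _].
  intros r Hr.
  apply NNPP; intro Hn.
  assert (Hbox : forall l eps, 0 < eps -> exists y, forall i, In i l -> Rabs (proj1_sig i y - r i) < eps).
  { intros l eps He. apply NNPP; intro H'. apply Hn. exists l, eps; split; auto.
    intros g Hg [y ->]. apply H'. exists y. exact Hg. }
  clear Hn.
  assert (Hq0 : exists q0, forall l eps W, 0 < eps -> opens W -> W q0 -> exists x,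
            (forall i, In i l -> Rabs (proj1_sig i (eY x) - r i) < eps) /\ W (eb x)).
  { apply NNPP; intro Hn0.
    destruct (choice' (fun (q : B) (t : list (Ix Y) * R * (B -> Prop)) =>
       0 < snd (fst t) /\ opens (snd t) /\ snd t q /\
       forall x, (forall i, In i (fst (fst t)) -> Rabs (proj1_sig i (eY x) - r i) < snd (fst t)) ->
         ~ snd t (eb x))) as [T HT].
    { intro q. apply NNPP; intro Hq. apply Hn0. exists q. intros l eps W He HW Wq.
      apply NNPP; intro Hx. apply Hq. exists (l, eps, W); simpl; repeat split; auto.
      intros x Hb Wx. apply Hx. exists x; auto. }
    destruct (CompB B (fun q b => snd (T q) b)) as [qs Hqs].
    { intro q; apply HT. }
    { intro b; exists b; apply HT. }
    set (Lall := flat_map (fun q => fst (fst (T q))) qs).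
    set (Emin := fold_right (fun q m => Rmin (snd (fst (T q))) m) 1 qs).
    assert (HEpos : 0 < Emin).
    { unfold Emin; clear Hqs; induction qs as [|q qs IH]; simpl; [lra|].
      apply Rmin_pos; auto. apply HT. }
    assert (HEle : forall q, In q qs -> Emin <= snd (fst (T q))).
    { unfold Emin; clear Hqs HEpos; induction qs as [|q' qs IH]; simpl; [tauto|].
      intros q [<-|Hq]; [apply Rmin_l|]. pose proof (Rmin_r (snd (fst (T q'))) (fold_right (fun q m => Rmin (snd (fst (T q))) m) 1 qs)).
      specialize (IH q Hq); lra. }
    destruct (Hbox Lall Emin HEpos) as [y Hy].
    destruct (DY y (fun y' => forall i, In i Lall -> Rabs (proj1_sig i y' - r i) < Emin)) as [y' [Hy' [x ->]]].
    { apply open_list; auto. intros i _. apply contR_ball, (proj2_sig i). }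
    { exact Hy. }
    destruct (Hqs (eb x)) as [q [Hq Wx]].
    apply (proj2 (proj2 (proj2 (HT q))) x); auto.
    intros i Hi. pose proof (HEle q Hq).
    assert (In i Lall) by (unfold Lall; apply in_flat_map; exists q; auto).
    specialize (Hy' i H0). lra. }
  destruct Hq0 as [q0 Hq0].
  destruct (classic (exists y, phi q0 = eZ y)) as [[y Ey]|Hno].
  - apply Hr. unfold image. exists y. apply functional_extensionality. intro i. unfold hmap. apply NNPP; intro Hne.
    set (e := Rabs (r i - proj1_sig i y) / 2).
    assert (He : 0 < e) by (unfold e; assert (r i - proj1_sig i y <> 0) by (intro; apply Hne; lra);
                            apply Rabs_pos_lt in H; lra).
    destruct (EmbZ (fun y' => Rabs (proj1_sig i y' - proj1_sig i y) < e)) as [W [HW EW]].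
    { apply contR_ball, (proj2_sig i). }
    destruct (Hq0 (i :: nil) e (fun b => W (phi b)) He (Hphi _ HW)) as [x [Hx Wx]].
    { rewrite Ey. apply EW. rewrite Rminus_diag, Rabs_R0; auto. }
    rewrite Hpe in Wx. apply EW in Wx. specialize (Hx i (or_introl eq_refl)).
    pose proof (Rabs_triang (r i - proj1_sig i (eY x)) (proj1_sig i (eY x) - proj1_sig i y)).
    replace (r i - proj1_sig i (eY x) + (proj1_sig i (eY x) - proj1_sig i y)) with (r i - proj1_sig i y) in H by ring.
    rewrite Rabs_minus_sym in Hx. unfold e in *. lra.
  - assert (Hq0x : ~ image eb q0).
    { intros [x ->]. apply Hno. exists (eY x); auto. }
    assert (Hnh : ~ hewitt_pt X B eb q0).
    { intro Hh. destruct (Hcond q0 (closure_of B _ q0 (conj Hh Hq0x))) as [y [_ Ey]].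
      apply Hno; exists y; auto. }
    unfold hewitt_pt in Hnh. apply not_all_ex_not in Hnh. destruct Hnh as [f Hf].
    apply imply_to_and in Hf. destruct Hf as [Hfc Hfn].
    pose proof (unbounded X B eb f q0 HS TX Hfc Hfn) as Hunb.
    destruct (sep Y Z eZ (fun y => ~ image eY y) TZ HausZ CeZ HK (phi q0)) as [W1 [W2 [HW1 [HW2 [W1q [HW2K Hd]]]]]].
    { intros a _ E; apply Hno; exists a; auto. }
    destruct (cutoff Y (fun y => ~ image eY y) (fun y => ~ W2 (eZ y)) TY CRY HK) as [psi [N [Hpsi [HN [HKN [HN0 HC1]]]]]].
    { apply (open_ext Y (fun y => W2 (eZ y))); [apply CeZ; auto| intro; tauto]. }
    { intros y Hy Hc. apply Hc. apply HW2K; auto. }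
    pose proof (X_open X Y eY TY HausY HK) as XO.
    set (Fa := fun y => match excluded_middle_informative (image eY y) with
                        | left H => Rabs (f (proj1_sig (constructive_indefinite_description _ H)))
                        | right _ => 0 end).
    assert (FaX : forall x, Fa (eY x) = Rabs (f x)).
    { intro x. unfold Fa. destruct (excluded_middle_informative _) as [H|H].
      - destruct (constructive_indefinite_description _ H) as [x' E]; simpl. apply InjY in E. subst; auto.
      - exfalso; apply H; exists x; auto. }
    assert (FaK : forall y, ~ image eY y -> Fa y = 0).
    { intros y Hy. unfold Fa. destruct (excluded_middle_informative _) as [H|H]; tauto. }
    set (g := fun y => psi y * Fa y).
    assert (Hg : contR Y g).
    { intros V HV. apply open_local; auto. intros y Hy.
      destruct (classic (image eY y)) as [[x ->]|Hyx].
      - assert (HgX : contR X (fun x => psi (eY x) * Rabs (f x))).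
        { apply contR_mult; auto. exact (cont_comp X Y R_space eY psi CeY Hpsi). apply contR_abs; auto. }
        destruct (EmbY _ (HgX V HV)) as [O [HO EO]].
        exists (fun y' => O y' /\ image eY y'); split; [apply open_inter; auto|split].
        + split; [apply EO|exists x; auto]. unfold g in Hy. rewrite FaX in Hy. exact Hy.
        + intros y' [Oy' [x' ->]]. apply EO in Oy'. unfold g. rewrite FaX. exact Oy'.
      - exists N; split; auto; split; auto. intros y' Ny'. unfold g in *.
        rewrite (HN0 y' Ny'). rewrite (HN0 y (HKN y Hyx)) in Hy. rewrite !Rmult_0_l in *. exact Hy. }
    set (i0 := exist _ g Hg : Ix Y).
    destruct (Hunb (Rabs (r i0) + 1)) as [W [HW [Wq Wf]]].
    destruct (Hq0 (i0 :: nil) 1 (fun b => W b /\ W1 (phi b)) Rlt_0_1) as [x [Hx [Wx W1x]]].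
    { apply open_inter; auto. }
    { split; auto. }
    specialize (Hx i0 (or_introl eq_refl)). simpl in Hx. specialize (Wf x Wx).
    rewrite Hpe in W1x.
    assert (Hp1 : psi (eY x) = 1).
    { apply HC1. intro H2. apply (Hd (eZ (eY x))); auto. }
    unfold g in Hx. rewrite Hp1, FaX, Rmult_1_l in Hx.
    pose proof (Rabs_triang (Rabs (f x) - r i0) (r i0)) as Htr. replace (Rabs (f x) - r i0 + r i0) with (Rabs (f x)) in Htr by ring.
    rewrite Rabs_Rabsolu in Htr. lra.
Qed.

Theorem lemma3p2 (X Y Z B : space) (eY : X -> Y) (eZ : Y -> Z) (eb : X -> B)
  (phi : B -> Z) :
  tychonoff X -> tychonoff Y ->
  extension X Y eY -> compact_remainder X Y eY ->
  compactification Y Z eZ ->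
  stone_cech X B eb ->
  continuous phi -> (forall x, phi (eb x) = eZ (eY x)) ->
  (realcompact Y <->
   forall p : B,
     closure (fun q => hewitt_pt X B eb q /\ ~ image eb q) p ->
     exists y : Y, ~ image eY y /\ phi p = eZ y).
Proof.
  intros HX HY HeY HK HZ HS Hphi Hpe. split.
  - intro HR. exact (forward X Y Z B eY eZ eb phi HX HY HeY HK HZ HS Hphi Hpe HR).
  - intro Hc. exists (Ix Y), (hmap Y). split.
    + apply hmap_embedding; auto.
    + exact (backward X Y Z B eY eZ eb phi HX HY HeY HK HZ HS Hphi Hpe Hc).
Qed.
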